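(* If a non-linear regularizing filter $(\varphi_\alpha)_{\alpha>0}$ satisfies Assumption A with constants $b,c>0$ (as in (A2)), then it satisfies Assumption B with $d=bc$ and $e=1/(2\sqrt b)$.
   Context: A non-linear regularizing filter is a family $(\varphi_\alpha)_{\alpha>0}$ of functions $\varphi_\alpha\colon(0,\infty)\times\mathbb{R}\to\mathbb{R}$ such that for all $\alpha,\kappa>0$: (F1) $\varphi_\alpha(\kappa,\cdot)$ is non-decreasing; (F2) $\varphi_\alpha(\kappa,\cdot)$ is 1-Lipschitz; (F3) $\varphi_\alpha(\kappa,0)=0$; (F4) $\lim_{\alpha\to0}\varphi_\alpha(\kappa,c)=c$ for all $c\in\mathbb{R}$. Assumption A: (A1) for all $\kappa>0$ and $y\in\mathbb{R}$, the set $\{(w-y)/\alpha:\varphi_\alpha(\kappa,w)=y\}$ does not depend on $\alpha>0$; (A2) for some $\tilde\alpha>0$ there exist $b,c>0$ such that for all $\kappa>0$ and $x\in\mathbb{R}$: $|x|\le\min\big(\varphi_{\tilde\alpha}(\kappa,\cdot)^{-1}(c\kappa)\big)\Rightarrow|\varphi_{\tilde\alpha}(\kappa,x)|\le\frac{\kappa^2}{\kappa^2+\tilde\alpha b}|x|$ (min denotes the smallest element of the preimage interval). Assumption B: (B1) for all $\kappa>0$ and $x\in\mathbb{R}$, the family $(|\varphi_\alpha(\kappa,x)|)_{\alpha>0}$ is monotonically increasing as $\alpha\downarrow0$ (i.e. $\alpha<\alpha'$ implies $|\varphi_\alpha(\kappa,x)|\ge|\varphi_{\alpha'}(\kappa,x)|$);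 (B2) there exist $d,e>0$ such that for all $\kappa>0$, $\alpha>0$, $x\in\mathbb{R}$: $|x|\le d\alpha/\kappa\Rightarrow|\varphi_\alpha(\kappa,x)|\le\frac{e\kappa}{\sqrt\alpha}|x|$. *)

(* Defs.v *)
From Stdlib Require Import Reals Lra.
Open Scope R_scope.

(* A family of filters: phi alpha kappa x  stands for  varphi_alpha(kappa, x).
   Only values with alpha > 0 and kappa > 0 are ever used. *)
Definition filter_family := R -> R -> R -> R.

Definition is_regularizing_filter (phi : filter_family) : Prop :=
  (forall alpha kappa, 0 < alpha -> 0 < kappa ->
     (forall x y, x <= y -> phi alpha kappa x <= phi alpha kappa y) /\
     (forall x y, Rabs (phi alpha kappa x - phi alpha kappa y) <= Rabs (x - y)) /\
     phi alpha kappa 0 = 0) /\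
  (forall kappa c, 0 < kappa ->
     forall eps, 0 < eps -> exists delta, 0 < delta /\
       forall alpha, 0 < alpha < delta -> Rabs (phi alpha kappa c - c) < eps).

(* (A1): the set {(w - y)/alpha | phi alpha kappa w = y} does not depend on alpha > 0. *)
Definition assumption_A1 (phi : filter_family) : Prop :=
  forall kappa y, 0 < kappa ->
  forall alpha alpha', 0 < alpha -> 0 < alpha' ->
  forall z,
    (exists w, phi alpha kappa w = y /\ z = (w - y) / alpha) <->
    (exists w, phi alpha' kappa w = y /\ z = (w - y) / alpha').

Definition is_min_preimage (phi : filter_family) (alpha kappa v m : R) : Prop :=
  phi alpha kappa m = v /\ (forall w, phi alpha kappa w = v -> m <= w).

Definition assumption_A2 (phi : filter_family) (atilde b c : R) : Prop :=
  forall kappa x, 0 < kappa ->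
  forall m, is_min_preimage phi atilde kappa (c * kappa) m ->
  Rabs x <= m ->
  Rabs (phi atilde kappa x) <= kappa ^ 2 / (kappa ^ 2 + atilde * b) * Rabs x.

Definition assumption_B1 (phi : filter_family) : Prop :=
  forall kappa x, 0 < kappa ->
  forall alpha alpha', 0 < alpha -> alpha < alpha' ->
  Rabs (phi alpha' kappa x) <= Rabs (phi alpha kappa x).

Definition assumption_B2 (phi : filter_family) (d e : R) : Prop :=
  forall kappa alpha x, 0 < kappa -> 0 < alpha ->
  Rabs x <= d * alpha / kappa ->
  Rabs (phi alpha kappa x) <= e * kappa / sqrt alpha * Rabs x.

(* Main.v *)
Require Import Defs.
From Stdlib Require Import Reals Lra Psatz.
Open Scope R_scope.

Lemma Rdiv_le_0_compat a b : 0 <= a -> 0 < b -> 0 <= a / b.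
Proof. intros. unfold Rdiv. apply Rmult_le_pos; [lra|]. left; apply Rinv_0_lt_compat; lra. Qed.

Lemma lip_cont (f : R -> R) :
  (forall x y, Rabs (f x - f y) <= Rabs (x - y)) -> continuity f.
Proof.
  intros Hl x eps He. exists eps; split; [lra|].
  intros y [_ Hy]. simpl in *. unfold R_dist in *.
  eapply Rle_lt_trans; [apply Hl|exact Hy].
Qed.

Lemma sign_pos (f : R -> R) x :
  (forall x y, x <= y -> f x <= f y) ->
  (forall x y, Rabs (f x - f y) <= Rabs (x - y)) -> f 0 = 0 ->
  0 <= x -> 0 <= f x <= x.
Proof.
  intros Hm Hl H0 Hx. pose proof (Hm 0 x Hx). pose proof (Hl x 0).
  rewrite H0 in *. rewrite !Rminus_0_r in H1.
  rewrite (Rabs_right x) in H1 by lra. rewrite Rabs_right in H1 by lra. lra.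
Qed.

Lemma sign_neg (f : R -> R) x :
  (forall x y, x <= y -> f x <= f y) ->
  (forall x y, Rabs (f x - f y) <= Rabs (x - y)) -> f 0 = 0 ->
  x <= 0 -> x <= f x <= 0.
Proof.
  intros Hm Hl H0 Hx. pose proof (Hm x 0 Hx). pose proof (Hl x 0).
  rewrite H0 in *. rewrite !Rminus_0_r in H1.
  rewrite (Rabs_left1 x) in H1 by lra. rewrite Rabs_left1 in H1 by lra. lra.
Qed.

Lemma exists_min (f : R -> R) v :
  (forall x y, x <= y -> f x <= f y) ->
  (forall x y, Rabs (f x - f y) <= Rabs (x - y)) -> f 0 = 0 ->
  0 < v -> (exists w, f w = v) ->
  exists m, f m = v /\ forall w, f w = v -> m <= w.
Proof.
  intros Hm Hl H0 Hv [w0 Hw0].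
  destruct (completeness (fun t => f (- t) = v)) as [l [Hub Hlub]].
  { exists 0. intros t Ht. destruct (Rle_dec t 0); [lra|].
    pose proof (Hm (-t) 0 ltac:(lra)). lra. }
  { exists (- w0). rewrite Ropp_involutive. exact Hw0. }
  assert (Hmin : forall w, f w = v -> - l <= w).
  { intros w Hw. assert (- w <= l) by (apply Hub; rewrite Ropp_involutive; exact Hw). lra. }
  exists (- l). split; [|exact Hmin].
  assert (f (- l) <= v) by (rewrite <- Hw0; apply Hm, Hmin, Hw0).
  destruct (Rle_lt_or_eq_dec _ _ H) as [Hlt|]; [|assumption].
  exfalso. set (eps := v - f (- l)).
  assert (l <= l - eps); [|unfold eps in *; lra].
  apply Hlub. intros t Ht. destruct (Rle_dec t (l - eps)) as [|Hn]; [assumption|].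
  exfalso. pose proof (Hmin (- t) Ht). pose proof (Hl (- t) (- l)).
  rewrite Ht in H2. rewrite Rabs_right in H2 by (unfold eps in *; lra).
  rewrite Rabs_right in H2 by lra. unfold eps in *; lra.
Qed.

Lemma transfer phi k a a' x : assumption_A1 phi -> 0 < k -> 0 < a -> 0 < a' ->
  phi a' k (phi a k x + a' * ((x - phi a k x) / a)) = phi a k x.
Proof.
  intros A1 hk ha ha'.
  destruct (A1 k (phi a k x) hk a a' ha ha' ((x - phi a k x) / a)) as [H _].
  destruct (H (ex_intro _ x (conj eq_refl eq_refl))) as [w [Hw Hz]].
  replace (phi a k x + a' * ((x - phi a k x) / a)) with w; [exact Hw|].
  rewrite Hz. field. lra.
Qed.

Lemma graph_mono (f : R -> R) x1 x2 :
  (forall x y, x <= y -> f x <= f y) -> f x1 < f x2 -> x1 <= x2.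
Proof. intros Hm H. destruct (Rle_dec x1 x2); [assumption|].
  pose proof (Hm x2 x1 ltac:(lra)). lra. Qed.

Lemma final_ineq b k a X Y : 0 < b -> 0 < k -> 0 < a -> 0 <= Y <= X ->
  Y * b * a <= k ^ 2 * (X - Y) -> Y <= 1 / (2 * sqrt b) * k / sqrt a * X.
Proof.
  intros hb hk ha HY H.
  pose proof (sqrt_lt_R0 b hb). pose proof (sqrt_lt_R0 a ha).
  pose proof (sqrt_sqrt b ltac:(lra)). pose proof (sqrt_sqrt a ltac:(lra)).
  set (s := sqrt b * sqrt a).
  assert (Hs : s * s = b * a) by (unfold s; nra).
  assert (0 < s) by (unfold s; nra).
  replace (1 / (2 * sqrt b) * k / sqrt a * X) with (k * X / (2 * s))
    by (unfold s; field; lra).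
  apply Rmult_le_reg_r with (2 * s); [lra|].
  unfold Rdiv. rewrite Rmult_assoc, Rinv_l, Rmult_1_r by lra.
  assert (2 * s * k <= s * s + k ^ 2).
  { pose proof (pow2_ge_0 (s - k)). replace ((s - k) ^ 2) with (s*s + k^2 - 2*s*k) in H4 by ring. lra. }
  assert (Y * (s * s + k ^ 2) <= k ^ 2 * X).
  { rewrite Hs. replace (Y * (b * a + k ^ 2)) with (Y * b * a + k^2 * Y) by ring. lra. }
  apply Rmult_le_reg_r with k; [lra|].
  assert (Y * (2 * s * k) <= Y * (s * s + k ^ 2)) by (apply Rmult_le_compat_l; lra).
  replace (Y * (2 * s) * k) with (Y * (2 * s * k)) by ring.
  replace (k * X * k) with (k ^ 2 * X) by ring. lra.
Qed.
Lemma A2alg k at0 b Y Z : 0 < k -> 0 < at0 -> 0 < b ->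
  Y <= k ^ 2 / (k ^ 2 + at0 * b) * (Y + at0 * Z) -> Y * b <= k ^ 2 * Z.
Proof.
  intros hk ha hb H.
  assert (hp : 0 < k ^ 2 + at0 * b) by (pose proof (pow_lt k 2 hk); nra).
  assert (Y * (k ^ 2 + at0 * b) <= k ^ 2 * (Y + at0 * Z)).
  { apply Rmult_le_reg_r with (/ (k ^ 2 + at0 * b)).
    - apply Rinv_0_lt_compat; lra.
    - rewrite Rmult_assoc, Rinv_r, Rmult_1_r by lra.
      replace (k ^ 2 * (Y + at0 * Z) * / (k ^ 2 + at0 * b))
        with (k ^ 2 / (k ^ 2 + at0 * b) * (Y + at0 * Z)) by (field; lra). exact H. }
  apply Rmult_le_reg_l with at0; [lra|].
  replace (at0 * (Y * b)) with (Y * (k ^ 2 + at0 * b) - k ^ 2 * Y) by ring.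
  replace (at0 * (k ^ 2 * Z)) with (k ^ 2 * (Y + at0 * Z) - k ^ 2 * Y) by ring. lra.
Qed.

Theorem lemma4p5 (phi : filter_family) (atilde b c : R) :
  is_regularizing_filter phi ->
  assumption_A1 phi ->
  0 < atilde -> 0 < b -> 0 < c ->
  assumption_A2 phi atilde b c ->
  assumption_B1 phi /\ assumption_B2 phi (b * c) (1 / (2 * sqrt b)).
Proof.
  intros [HF HF4] A1 hat hb hc A2. split.
  - intros k x hk a a' ha haa'.
    destruct (HF a k) as [Hm [Hl H0]]; try lra.
    destruct (HF a' k) as [Hm' [Hl' H0']]; try lra.
    pose proof (transfer phi k a' a x A1 hk ltac:(lra) ha) as Ht.
    set (y' := phi a' k x) in *.
    assert (Hq : a' * ((x - y') / a') = x - y') by (field; lra).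
    destruct (Rle_dec 0 x) as [Hx|Hx].
    + pose proof (sign_pos _ x Hm' Hl' H0' Hx) as Hy. fold y' in Hy.
      assert (y' + a * ((x - y') / a') <= x).
      { assert (0 <= (x - y') / a') by (apply Rdiv_le_0_compat; lra).
        assert (a * ((x - y') / a') <= a' * ((x - y') / a')) by (apply Rmult_le_compat_r; lra).
        lra. }
      pose proof (Hm _ _ H). rewrite Ht in H1.
      rewrite !Rabs_right; lra.
    + pose proof (sign_neg _ x Hm' Hl' H0' ltac:(lra)) as Hy. fold y' in Hy.
      assert (x <= y' + a * ((x - y') / a')).
      { assert ((x - y') / a' <= 0).
        { assert (0 <= (y' - x) / a') by (apply Rdiv_le_0_compat; lra). unfold Rdiv in *. lra. }
        assert (a' * ((x - y') / a') <= a * ((x - y') / a')).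
        { nra. }
        lra. }
      pose proof (Hm _ _ H). rewrite Ht in H1.
      rewrite !Rabs_left1; lra.
  - intros k a x hk ha Hx.
    destruct (HF a k) as [Hm [Hl H0]]; try lra.
    destruct (HF atilde k) as [Hmt [Hlt H0t]]; try lra.
    assert (Hex : exists w, phi atilde k w = c * k).
    { destruct (HF4 k (2 * c * k) hk (c * k)) as [d [hd Hd]]; [nra|].
      set (a1 := d / 2).
      destruct (HF a1 k) as [Hm1 [Hl1 H01]]; [unfold a1; lra|lra|].
      pose proof (Hd a1 ltac:(unfold a1; lra)) as Hd1.
      apply Rabs_def2 in Hd1.
      destruct (IVT (fun w => phi a1 k w - c * k) 0 (2 * c * k)) as [w1 [_ Hw1]].
      + apply (continuity_minus _ _ (lip_cont _ Hl1) (continuity_const (fun _ => c * k) (fun _ _ => eq_refl))).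
      + nra.
      + simpl. rewrite H01. nra.
      + simpl. lra.
      + simpl in Hw1.
        destruct (A1 k (c * k) hk a1 atilde ltac:(unfold a1; lra) hat ((w1 - c * k) / a1)) as [H _].
        destruct H as [w [Hw _]].
        * exists w1. split; [lra|reflexivity].
        * exists w; exact Hw. }
    destruct (exists_min _ (c * k) Hmt Hlt H0t ltac:(nra) Hex) as [m [Hmv Hmmin]].
    assert (Hm0 : 0 <= m).
    { destruct (Rle_dec 0 m); [assumption|].
      pose proof (Hmt m 0 ltac:(lra)). rewrite H0t in H. nra. }
    set (zm := (m - c * k) / atilde).
    assert (Hmz : m = c * k + atilde * zm) by (unfold zm; field; lra).
    assert (HZm : c * k * b <= k ^ 2 * zm).
    { pose proof (A2 k m hk m (conj Hmv Hmmin) ltac:(rewrite Rabs_right; lra)) as H.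
      rewrite Hmv in H. rewrite Rabs_right in H by nra. rewrite (Rabs_right m) in H by lra.
      apply (A2alg k atilde b); try lra. rewrite <- Hmz. exact H. }
    assert (Hzm2 : c * b / k <= zm).
    { apply Rmult_le_reg_l with k; [lra|].
      replace (k * (c * b / k)) with (c * k * b / k * 1) by (field; lra).
      apply Rmult_le_reg_l with k; [lra|].
      replace (k * (c * k * b / k * 1)) with (c * k * b) by (field; lra).
      replace (k * (k * zm)) with (k ^ 2 * zm) by ring. exact HZm. }
    assert (Hbca : b * c * a / k = a * (c * b / k)) by (field; lra).
    pose proof (transfer phi k a atilde x A1 hk ha hat) as Hxt.
    set (y := phi a k x) in *.
    set (z := (x - y) / a) in *.
    assert (Hxz : x = y + a * z) by (unfold z; field; lra).
    set (xt := y + atilde * z) in *.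
    apply (final_ineq b k a); try lra.
    { split; [apply Rabs_pos|]. pose proof (Hl x 0). rewrite H0, !Rminus_0_r in H. exact H. }
    destruct (Rle_dec 0 x) as [Hx0|Hx0].
    + pose proof (sign_pos _ x Hm Hl H0 Hx0) as Hy. fold y in Hy.
      assert (Hz0 : 0 <= z) by (unfold z; apply Rdiv_le_0_compat; lra).
      rewrite (Rabs_right x), (Rabs_right y) by lra.
      assert (K : y * b <= k ^ 2 * z).
      { destruct (Rle_dec xt m) as [Hle|Hgt].
        - pose proof (A2 k xt hk m (conj Hmv Hmmin)) as H.
          rewrite Hxt, Rabs_right, (Rabs_right y) in H; try (unfold xt; nra).
          apply (A2alg k atilde b); try lra. apply H; exact Hle.
        - pose proof (Hmt m xt ltac:(lra)) as H. rewrite Hmv, Hxt in H.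
          destruct (Rle_lt_or_eq_dec _ _ H) as [Hlt'|Heq].
          + exfalso.
            pose proof (transfer phi k atilde a m A1 hk hat ha) as Hw.
            rewrite Hmv in Hw. fold zm in Hw.
            assert (c * k + a * zm <= x).
            { apply (graph_mono (phi a k)); [exact Hm|]. rewrite Hw. fold y. lra. }
            assert (a * (c * b / k) <= a * zm) by (apply Rmult_le_compat_l; lra).
            rewrite Rabs_right in Hx by lra. nra.
          + assert (zm <= z).
            { apply Rmult_le_reg_l with atilde; [lra|]. unfold xt in Hgt. lra. }
            assert (k ^ 2 * zm <= k ^ 2 * z) by (apply Rmult_le_compat_l; [nra|lra]).
            rewrite <- Heq. lra. }
      assert (y * b * a <= k ^ 2 * z * a) by (apply Rmult_le_compat_r; lra).
      replace (x - y) with (z * a) by (rewrite Hxz; ring). lra.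
    + pose proof (sign_neg _ x Hm Hl H0 ltac:(lra)) as Hy. fold y in Hy.
      assert (Hz0 : z <= 0).
      { assert (0 <= (y - x) / a) by (apply Rdiv_le_0_compat; lra). unfold z, Rdiv in *. lra. }
      rewrite (Rabs_left1 x), (Rabs_left1 y) by lra.
      set (y0 := phi atilde k (- m)).
      set (z0 := (- m - y0) / atilde).
      pose proof (sign_neg _ (- m) Hmt Hlt H0t ltac:(lra)) as Hy0. fold y0 in Hy0.
      assert (Hmz0 : - m = y0 + atilde * z0) by (unfold z0; field; lra).
      assert (HK0 : - y0 * b <= k ^ 2 * - z0).
      { pose proof (A2 k (- m) hk m (conj Hmv Hmmin)) as H. fold y0 in H.
        rewrite Rabs_left1, Rabs_left1 in H by lra.
        apply (A2alg k atilde b); try lra.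
        replace (- y0 + atilde * - z0) with (- - m) by lra. apply H. lra. }
      assert (Hz02 : c * b / k <= - z0).
      { destruct (Rle_dec (c * b / k) (- z0)) as [|Hn]; [assumption|]. exfalso.
        assert (k ^ 2 * - z0 < k ^ 2 * (c * b / k)) by (apply Rmult_lt_compat_l; nra).
        replace (k ^ 2 * (c * b / k)) with (c * k * b) in H by (field; lra).
        assert (- y0 < c * k) by nra.
        assert (atilde * - z0 < atilde * (c * b / k)) by (apply Rmult_lt_compat_l; lra).
        assert (atilde * (c * b / k) <= atilde * zm) by (apply Rmult_le_compat_l; lra).
        lra. }
      assert (K : - y * b <= k ^ 2 * - z).
      { destruct (Rle_dec (- m) xt) as [Hle|Hgt].
        - pose proof (A2 k xt hk m (conj Hmv Hmmin)) as H.
          rewrite Hxt, Rabs_left1, (Rabs_left1 y) in H; try (unfold xt; nra).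
          apply (A2alg k atilde b); try lra.
          replace (- y + atilde * - z) with (- xt) by (unfold xt; ring).
          apply H; lra.
        - pose proof (Hmt xt (- m) ltac:(lra)) as H. rewrite Hxt in H. fold y0 in H.
          destruct (Rle_lt_or_eq_dec _ _ H) as [Hlt'|Heq].
          + exfalso.
            pose proof (transfer phi k atilde a (- m) A1 hk hat ha) as Hw.
            fold y0 in Hw. fold z0 in Hw.
            assert (x <= y0 + a * z0).
            { apply (graph_mono (phi a k)); [exact Hm|]. rewrite Hw. fold y. lra. }
            assert (a * (c * b / k) <= a * - z0) by (apply Rmult_le_compat_l; lra).
            rewrite Rabs_left1 in Hx by lra.
            assert (x = y0 + a * z0) by lra.
            assert (phi a k x = y0) by (rewrite H3; exact Hw). fold y in H4. lra.
          + assert (z <= z0).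
            { apply Rmult_le_reg_l with atilde; [lra|]. unfold xt in Hgt. lra. }
            assert (k ^ 2 * - z0 <= k ^ 2 * - z) by (apply Rmult_le_compat_l; [nra|lra]).
            rewrite Heq. lra. }
      assert (- y * b * a <= k ^ 2 * - z * a) by (apply Rmult_le_compat_r; lra).
      replace (- x - - y) with (- z * a) by (rewrite Hxz; ring). lra.
Qed.
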